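(* Consider the curved-exam game described in the context. Fix a student $i$, an effort $x_i\in[0,1)$ and an increment $\Delta x_i>0$ with $x_i+\Delta x_i<1$. Then the extended-real-valued function $$x_{-i}\longmapsto \log U_i(x_i+\Delta x_i,x_{-i})-\log U_i(x_i,x_{-i})\qquad(\log 0:=-\infty)$$ is non-decreasing in each opponent effort $x_j$, $j\neq i$, on $[0,1]^{n-1}$.
   Context: The curved-exam game $\Gamma_n$: fix an integer $n\ge 2$ (number of students), ability parameters $\alpha_1,\dots,\alpha_n\in(0,1)$ and a target mean $m\in(0,1)$. Each student $i\in\{1,\dots,n\}$ chooses an effort $x_i\in[0,1]$; write $x=(x_1,\dots,x_n)$, $x_{-i}=(x_j)_{j\neq i}$, $\bar x=\frac1n\sum_{j=1}^n x_j$ and $\bar x_{-i}=\frac1{n-1}\sum_{j\neq i}x_j$. Student $i$'s curved grade is $G_i(x)=x_i+\max(m-\bar x,0)=\max\!\big(m+\tfrac{n-1}{n}(x_i-\bar x_{-i}),\,x_i\big)$ (never truncated at $1$), his leisure is $1-x_i$, and his payoff is $U_i(x)=G_i(x)^{\alpha_i}(1-x_i)^{1-\alpha_i}$. *)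

(* Defs.v *)
From HB Require Import structures.
From mathcomp Require Import all_boot all_order all_algebra.
From mathcomp Require Import all_classical all_reals all_analysis.
Set Implicit Arguments. Unset Strict Implicit. Unset Printing Implicit Defensive.
Import Order.TTheory GRing.Theory Num.Theory.
Local Open Scope ring_scope.

Section CurvedExam.
Variables (R : realType) (n : nat).

Definition mean_effort (x : 'I_n -> R) : R := (\sum_(j < n) x j) / n%:R.

(* curved grade G_i(x) = x_i + max(m - \bar x, 0) (never truncated at 1) *)
Definition grade (m : R) (x : 'I_n -> R) (i : 'I_n) : R :=
  x i + Num.max (m - mean_effort x) 0.

(* payoff U_i(x) = G_i(x)^alpha_i * (1 - x_i)^(1 - alpha_i), real powers via powR
   (with 0 `^ a = 0 for a <> 0) *)
Definition payoff (alpha : 'I_n -> R) (m : R) (x : 'I_n -> R) (i : 'I_n) : R :=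
  (grade m x i) `^ (alpha i) * (1 - x i) `^ (1 - alpha i).

Definition upd (x : 'I_n -> R) (i : 'I_n) (v : R) : 'I_n -> R :=
  fun k => if k == i then v else x k.

End CurvedExam.

Definition elog (R : realType) (u : R) : \bar R :=
  if 0 < u then (ln u)%:E else -oo%E.

Definition log_gain (R : realType) (n : nat) (alpha : 'I_n -> R) (m : R)
  (i : 'I_n) (xi dx : R) (x : 'I_n -> R) : \bar R :=
  (elog (payoff alpha m (upd x i (xi + dx)) i) - elog (payoff alpha m (upd x i xi) i))%E.

(* Main.v *)
Require Import Defs.
From HB Require Import structures.
From mathcomp Require Import all_boot all_order all_algebra.
From mathcomp Require Import all_classical all_reals all_analysis.
From mathcomp Require Import ring lra.
Import Order.TTheory GRing.Theory Num.Theory.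
Local Open Scope ring_scope.

Lemma sum_upd (R : realType) (n : nat) (x : 'I_n -> R) (i : 'I_n) (v : R) :
  \sum_(k < n) upd x i v k = v + \sum_(k < n | k != i) x k.
Proof.
rewrite (bigD1 i) //= /upd eqxx; congr (_ + _).
by apply: eq_bigr => k /negbTE ->.
Qed.

Lemma elog_pay (R : realType) (a G w : R) (ha : 0 < a < 1) (hG : 0 <= G) (hw : 0 < w) :
  elog (G `^ a * w `^ (1 - a)) = if 0 < G then (a * ln G + (1 - a) * ln w)%:E else (-oo)%E.
Proof.
case/andP: ha => ha0 ha1.
rewrite /elog; case: (ltP 0 G) => hG0.
  have p1 := powR_gt0 a hG0; have p2 := powR_gt0 (1 - a) hw.
  by rewrite (mulr_gt0 p1 p2) lnM ?posrE // !ln_powR.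
have -> : G = 0 by apply/eqP; rewrite eq_le hG0 hG.
by rewrite powR0 ?mul0r ?ltxx // gt_eqF.
Qed.

Lemma key (R : realType) (v d e u w : R) (hv : 0 <= v) (he : 0 < e) (hed : e <= d)
  (huw : w <= u) :
  (v + d + Num.max (u - e) 0) * (v + Num.max w 0) <=
  (v + d + Num.max (w - e) 0) * (v + Num.max u 0).
Proof.
rewrite /Num.max.
case: ifP => /= h1; case: ifP => /= h2; case: ifP => /= h3; case: ifP => /= h4;
  move: h1 h2 h3 h4; rewrite ?ltNge => h1 h2 h3 h4; try nra.
Qed.

Theorem mainTheorem1 (R : realType) (n : nat) (hn : (2 <= n)%N)
  (alpha : 'I_n -> R) (halpha : forall k, 0 < alpha k < 1)
  (m : R) (hm : 0 < m < 1)
  (i : 'I_n) (xi dx : R) (hxi : 0 <= xi < 1) (hdx : 0 < dx) (hxdx : xi + dx < 1)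
  (j : 'I_n) (hji : j != i)
  (x y : 'I_n -> R)
  (hx : forall k, k != i -> 0 <= x k <= 1)
  (hy : forall k, k != i -> 0 <= y k <= 1)
  (hxy : forall k, k != i -> k != j -> x k = y k)
  (hxyj : x j <= y j) :
  (log_gain alpha m i xi dx x <= log_gain alpha m i xi dx y)%E.
Proof.
set N : R := n%:R.
have hN : 2 <= N by rewrite /N (ler_nat R 2 n).
have hxy' : \sum_(k < n | k != i) x k <= \sum_(k < n | k != i) y k.
  apply: ler_sum => k hk; case: (eqVneq k j) => [->|hkj] //.
  by rewrite hxy.
set Sx := \sum_(k < n | k != i) x k in hxy'.
set Sy := \sum_(k < n | k != i) y k in hxy'.
have gE : forall (z : 'I_n -> R) v, grade m (upd z i v) i
    = v + Num.max (m - (v + \sum_(k < n | k != i) z k) / N) 0.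
  by move=> z v; rewrite /grade /mean_effort sum_upd /upd eqxx.
case/andP: hxi => hxi0 hxi1.
have ha := halpha i; case/andP: (ha) => ha0 ha1.
rewrite /log_gain /payoff !gE -/Sx -/Sy.
have updi : forall (z : 'I_n -> R) v, upd z i v i = v by move=> z v; rewrite /upd eqxx.
rewrite !updi.
have gnn : forall S v, 0 <= v -> 0 <= v + Num.max (m - (v + S) / N) 0.
  by move=> S v hv; apply: addr_ge0 => //; rewrite le_max lexx orbT.
have gpos : forall S v, 0 < v -> 0 < v + Num.max (m - (v + S) / N) 0.
  by move=> S v hv; apply: ltr_wpDr => //; rewrite le_max lexx orbT.
have hv1 : 0 < xi + dx by lra.
have w1 : 0 < 1 - (xi + dx) by lra.
have w0 : 0 < 1 - xi by lra.
rewrite (@elog_pay _ _ _ _ ha (gnn Sx _ (ltW hv1)) w1) (@elog_pay _ _ _ _ ha (gnn Sx _ hxi0) w0).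
rewrite (@elog_pay _ _ _ _ ha (gnn Sy _ (ltW hv1)) w1) (@elog_pay _ _ _ _ ha (gnn Sy _ hxi0) w0).
rewrite (gpos Sx (xi+dx) hv1) (gpos Sy (xi+dx) hv1).
set gx1 := xi + dx + _.
set gy1 := xi + dx + _.
set gx0 := xi + Num.max (m - (xi + Sx) / N) 0.
set gy0 := xi + Num.max (m - (xi + Sy) / N) 0.
have hyx0 : gy0 <= gx0.
  rewrite /gy0 /gx0 lerD2l; apply: le_max2 => //; rewrite lerB // ler_pM2r ?invr_gt0; lra.
case: (ltP 0 gy0) => hy0; last by rewrite /= leey.
have hx0 : 0 < gx0 by lra.
rewrite hx0 lee_fin.
have hx1 : 0 < gx1 by apply: gpos.
have hy1 : 0 < gy1 by apply: gpos.
suff : ln gx1 + ln gy0 <= ln gy1 + ln gx0 by nra.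
rewrite -!lnM ?posrE // ler_ln ?posrE ?mulr_gt0 //.
have hN0 : 0 < N by lra.
have := @key _ xi dx (dx/N) (m - (xi + Sx)/N) (m - (xi+Sy)/N) hxi0.
have E1 : forall S, m - (xi + dx + S)/N = m - (xi + S)/N - dx/N.
  by move=> S; rewrite !mulrDl; ring.
rewrite /gx1 /gy1 !E1 -/gx0 -/gy0.
rewrite -/(gx0) in hx0 *.
apply.
- by rewrite divr_gt0.
- rewrite ler_pdivrMr //; nra.
- rewrite lerB // ler_pM2r ?invr_gt0; lra.
Qed.
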